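(* Let $$y=\frac{s^3(2s^2-4s+3)(s^2-2s+2)}{(2s^2-2s+1)(3s^2-4s+2)},\qquad t=\left(\frac{s^2(2s^2-4s+3)}{3s^2-4s+2}\right)^2.$$ Then $y(t)$ is a solution of $\mathrm{P}_{\mathrm{VI}}$ with parameters $(\theta_1,\theta_2,\theta_3,\theta_4)=(1/3,1/4,1/2,2/3)$.
   Context: $\mathrm{P}_{\mathrm{VI}}$ is the equation $$\frac{d^2y}{dt^2}=\frac12\Big(\frac1y+\frac1{y-1}+\frac1{y-t}\Big)\Big(\frac{dy}{dt}\Big)^2-\Big(\frac1t+\frac1{t-1}+\frac1{y-t}\Big)\frac{dy}{dt}+\frac{y(y-1)(y-t)}{t^2(t-1)^2}\Big(\alpha+\beta\frac{t}{y^2}+\gamma\frac{t-1}{(y-1)^2}+\delta\frac{t(t-1)}{(y-t)^2}\Big),$$ with $\alpha=(\theta_4-1)^2/2$, $\beta=-\theta_1^2/2$, $\gamma=\theta_3^2/2$, $\delta=(1-\theta_2^2)/2$. When $y,t$ are given as rational functions of a parameter on a curve, derivatives with respect to $t$ are computed via the chain rule. *)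

(* Defs.v *)
From Stdlib Require Import Reals.
From Coquelicot Require Import Coquelicot.
Open Scope R_scope.

Definition PVI_alpha (th4 : R) : R := (th4 - 1) ^ 2 / 2.
Definition PVI_beta (th1 : R) : R := - (th1 ^ 2) / 2.
Definition PVI_gamma (th3 : R) : R := th3 ^ 2 / 2.
Definition PVI_delta (th2 : R) : R := (1 - th2 ^ 2) / 2.

(* The P_VI equation at a point, given values y, t, y' = dy/dt, y'' = d^2y/dt^2. *)
Definition PVI_eq (th1 th2 th3 th4 : R) (y t y1 y2 : R) : Prop :=
  y2 = / 2 * (/ y + / (y - 1) + / (y - t)) * y1 ^ 2
       - (/ t + / (t - 1) + / (y - t)) * y1
       + y * (y - 1) * (y - t) / (t ^ 2 * (t - 1) ^ 2)
         * (PVI_alpha th4 + PVI_beta th1 * t / y ^ 2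
            + PVI_gamma th3 * (t - 1) / (y - 1) ^ 2
            + PVI_delta th2 * t * (t - 1) / (y - t) ^ 2).

(* A curve s |-> (t(s), y(s)) gives a solution of P_VI when, at every parameter
   value where everything is defined, P_VI holds with t-derivatives computed by
   the chain rule: dy/dt = y'(s)/t'(s), d^2y/dt^2 = (d/ds (dy/dt)) / t'(s). *)
Definition dydt (yf tf : R -> R) (s : R) : R := Derive yf s / Derive tf s.
Definition d2ydt2 (yf tf : R -> R) (s : R) : R :=
  Derive (dydt yf tf) s / Derive tf s.

Definition y_s (s : R) : R :=
  s ^ 3 * (2 * s ^ 2 - 4 * s + 3) * (s ^ 2 - 2 * s + 2)
  / ((2 * s ^ 2 - 2 * s + 1) * (3 * s ^ 2 - 4 * s + 2)).
Definition t_s (s : R) : R :=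
  (s ^ 2 * (2 * s ^ 2 - 4 * s + 3) / (3 * s ^ 2 - 4 * s + 2)) ^ 2.

(* Main.v *)
Require Import Defs.
From Stdlib Require Import Reals Lra Lia Psatz FunctionalExtensionality.
From Coquelicot Require Import Coquelicot.
Open Scope R_scope.

Lemma D1pos x : 2 * x ^ 2 - 2 * x + 1 > 0. Proof. pose proof (pow2_ge_0 (x-1)); pose proof (pow2_ge_0 x). nra. Qed.
Lemma D2pos x : 3 * x ^ 2 - 4 * x + 2 > 0. Proof. pose proof (pow2_ge_0 (3*x-2)). nra. Qed.
Definition Y1 (x : R) : R :=
  let N := x ^ 3 * (2 * x ^ 2 - 4 * x + 3) * (x ^ 2 - 2 * x + 2) in
  let D := (2 * x ^ 2 - 2 * x + 1) * (3 * x ^ 2 - 4 * x + 2) in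
  let dN := 3 * x ^ 2 * (2 * x ^ 2 - 4 * x + 3) * (x ^ 2 - 2 * x + 2)
          + x ^ 3 * (4 * x - 4) * (x ^ 2 - 2 * x + 2)
          + x ^ 3 * (2 * x ^ 2 - 4 * x + 3) * (2 * x - 2) in
  let dD := (4 * x - 2) * (3 * x ^ 2 - 4 * x + 2) + (2 * x ^ 2 - 2 * x + 1) * (6 * x - 4) in
  (dN * D - N * dD) / D ^ 2.

Definition T1 (x : R) : R :=
  let N := x ^ 2 * (2 * x ^ 2 - 4 * x + 3) in
  let D := 3 * x ^ 2 - 4 * x + 2 in
  let dN := 2 * x * (2 * x ^ 2 - 4 * x + 3) + x ^ 2 * (4 * x - 4) in
  let dD := 6 * x - 4 in
  2 * (N / D) * ((dN * D - N * dD) / D ^ 2).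

Lemma DY x : Derive y_s x = Y1 x.
Proof.
  apply is_derive_unique. unfold y_s, Y1.
  pose proof (D1pos x); pose proof (D2pos x).
  auto_derive.
  - repeat split; try apply Rmult_integral_contrapositive; try split; lra.
  - field. split; lra.
Qed.

Lemma DT x : Derive t_s x = T1 x.
Proof.
  apply is_derive_unique. unfold t_s, T1.
  pose proof (D1pos x); pose proof (D2pos x).
  auto_derive.
  - repeat split; lra.
  - field. lra.
Qed.

Theorem mainTheorem8 :
  forall s : R,
    (2 * s ^ 2 - 2 * s + 1) <> 0 ->
    (3 * s ^ 2 - 4 * s + 2) <> 0 ->
    Derive t_s s <> 0 ->
    t_s s <> 0 -> t_s s - 1 <> 0 ->
    y_s s <> 0 -> y_s s - 1 <> 0 -> y_s s - t_s s <> 0 ->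
    PVI_eq (1/3) (1/4) (1/2) (2/3)
      (y_s s) (t_s s) (dydt y_s t_s s) (d2ydt2 y_s t_s s).
Proof.
  intros s H1 H2 Ht H3 H4 H5 H6 H7.
  rewrite DT in Ht.
  assert (Ef : dydt y_s t_s = fun x => Y1 x / T1 x).
  { apply functional_extensionality. intro x. unfold dydt. rewrite DY, DT. reflexivity. }
  unfold d2ydt2. rewrite Ef, DT. cbv beta.
  evar (l : R).
  assert (Hl : is_derive (fun x => Y1 x / T1 x) s l).
  { pose proof (D1pos s); pose proof (D2pos s).
    unfold Y1, T1 in *. cbv zeta in Ht. unfold l. auto_derive.
    - assert (A1 : 2 * (s * (s * 1)) + - (2 * s) + 1 <> 0) by (simpl in H; lra).
      assert (A2 : 3 * (s * (s * 1)) + - (4 * s) + 2 <> 0) by (simpl in H0; lra).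
      repeat split; try exact I;
      try (repeat apply Rmult_integral_contrapositive_currified; first [exact A1 | exact A2 | lra]).
      intro E0; apply Ht; rewrite <- E0; simpl; field; auto.
    - reflexivity. }
  assert (E: Derive (fun x:R => Y1 x / T1 x) s = l) by (apply is_derive_unique; exact Hl).
  rewrite E. unfold l.
  unfold PVI_eq, PVI_alpha, PVI_beta, PVI_gamma, PVI_delta.
  unfold Y1, T1, y_s, t_s in *.
  assert (P1 : 2 * s ^ 2 - 4 * s + 3 <> 0).
  { pose proof (pow2_ge_0 (s-1)). nra. }
  assert (P2 : s ^ 2 - 2 * s + 2 <> 0).
  { pose proof (pow2_ge_0 (s-1)). nra. }
  field.
  repeat split; auto.
  - intro E0; apply H7; change (y_s s - t_s s = 0).
    replace (y_s s - t_s s) with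
      ((s ^ 3 * (2 * s ^ 2 - 4 * s + 3) * (s ^ 2 - 2 * s + 2) *
  (3 * s ^ 2 - 4 * s + 2) -
  (s ^ 2 * (2 * s ^ 2 - 4 * s + 3)) ^ 2 * (2 * s ^ 2 - 2 * s + 1)) /
      ((2 * s ^ 2 - 2 * s + 1) * (3 * s ^ 2 - 4 * s + 2) ^ 2))
      by (unfold y_s, t_s; field; auto).
    unfold Rdiv; apply Rmult_eq_0_compat_r; exact E0.
  - intro E0; apply H6; change (y_s s - 1 = 0).
    replace (y_s s - 1) with
      ((s ^ 3 * (2 * s ^ 2 - 4 * s + 3) * (s ^ 2 - 2 * s + 2) -
  (2 * s ^ 2 - 2 * s + 1) * (3 * s ^ 2 - 4 * s + 2)) /
      ((2 * s ^ 2 - 2 * s + 1) * (3 * s ^ 2 - 4 * s + 2)))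
      by (unfold y_s; field; auto).
    unfold Rdiv; apply Rmult_eq_0_compat_r; exact E0.
  - intro E0; apply H5. rewrite E0. unfold Rdiv; ring.
  - intro E0; apply H4; change (t_s s - 1 = 0).
    replace (t_s s - 1) with
      (((s ^ 2 * (2 * s ^ 2 - 4 * s + 3)) ^ 2 - (3 * s ^ 2 - 4 * s + 2) ^ 2) /
       (3 * s ^ 2 - 4 * s + 2) ^ 2)
      by (unfold t_s; field; auto).
    unfold Rdiv; apply Rmult_eq_0_compat_r; exact E0.
  - intro E0; apply Ht. rewrite E0. unfold Rdiv; ring.
Qed.
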